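(* Let $G=(V,E)$ be a graph with adjacency matrix $A$, let $k$ be a positive integer and $C=\{1,\dots,k\}$. Then $G$ is $k$-colorable if and only if there exists $x\in\{0,1\}^{V\times C}$ such that $\sum_{j\in C}x_{ij}=1$ for all $i\in V$, and $\sum_{i\in V}A_{pi}x_{ij}\le |E|(1-x_{pj})$ for all $p\in V$ and $j\in C$. *)

(* Defs.v *)
From mathcomp Require Import all_boot all_order.
Set Implicit Arguments. Unset Strict Implicit. Unset Printing Implicit Defensive.

Definition simple_graph (V : finType) (e : rel V) : Prop :=
  symmetric e /\ irreflexive e.

Definition adj (V : finType) (e : rel V) (p i : V) : nat := e p i.

Definition edges (V : finType) (e : rel V) : {set {set V}} :=
  [set s : {set V} | [exists x, exists y, e x y && (s == [set x; y])]].

(* k-colorability: a coloring with colors in 'I_k (i.e. C = {1..k})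
   giving adjacent vertices different colors. *)
Definition colorable (V : finType) (e : rel V) (k : nat) : Prop :=
  exists c : V -> 'I_k, forall x y, e x y -> c x != c y.

(* Main.v *)
Require Import Defs.
From mathcomp Require Import all_boot all_order.

Lemma deg_le (V : finType) (e : rel V) (p : V) :
  simple_graph e -> \sum_(i : V) adj e p i <= #|edges e|.
Proof.
move=> [sym irr].
have -> : \sum_(i : V) adj e p i = #|[set i | e p i]|.
  rewrite -sum1_card [RHS]big_mkcond /=; apply: eq_bigr => i _.
  by rewrite /adj inE; case: (e p i).
rewrite -(@card_in_imset _ _ (fun i => [set p; i])).
  apply: subset_leq_card; apply/subsetP => s /imsetP [i]; rewrite inE => epi ->.
  by rewrite inE; apply/existsP; exists p; apply/existsP; exists i; rewrite epi eqxx.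
move=> i i'; rewrite !inE => epi epi' eqs.
have : i \in [set p; i'] by rewrite -eqs !inE eqxx orbT.
rewrite !inE => /orP [/eqP ip|/eqP //].
by move: epi; rewrite ip irr.
Qed.

Theorem lemma12 (V : finType) (e : rel V) (k : nat) :
  simple_graph e -> 0 < k ->
  colorable e k <->
  exists x : V -> 'I_k -> bool,
    (forall i : V, \sum_(j < k) (x i j : nat) = 1) /\
    (forall (p : V) (j : 'I_k),
        \sum_(i : V) adj e p i * x i j <= #|edges e| * (1 - x p j)).
Proof.
move=> sg k0; split.
  move=> [c Hc]; exists (fun i j => c i == j); split.
    move=> i; rewrite (bigD1 (c i)) //= eqxx big1 // => j /negPf.
    by rewrite eq_sym => ->.
  move=> p j; case: (eqVneq (c p) j) => [<-|ne].
    rewrite subnn muln0 leqn0 sum_nat_eq0; apply/forallP => i; apply/implyP => _.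
    rewrite /adj; case epi: (e p i) => //=.
    move: (Hc _ _ epi); rewrite eq_sym; case: eqP => //.
  rewrite [1 - _]/= muln1.
  apply: (leq_trans _ (deg_le _ _ p sg)).
  by apply: leq_sum => i _; case: (c i == j); rewrite ?muln1 ?muln0.
move=> [x [H1 H2]].
have ex : forall i, exists j, x i j.
  move=> i; apply/existsP; case: (boolP [exists j, x i j]) => //; rewrite negb_exists => /forallP Hf.
  by move: (H1 i); rewrite big1 // => j _; rewrite (negPf (Hf j)).
exists (fun i => xchoose (ex i)) => a b eab; apply/eqP => eq.
have xa := xchooseP (ex a); have xb := xchooseP (ex b).
move: (H2 a (xchoose (ex a))); rewrite xa subnn muln0 leqn0 sum_nat_eq0.
move=> /forallP /(_ b); rewrite /adj eab eq xb.
by [].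
Qed.
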